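(* Let $n\geq 4$ and let $T=S_{x,y}$ be a double star on $n$ vertices, where $x+y=n-2$. If $T$ is maximal with respect to $e^{M_2}$ among all double stars on $n$ vertices, then $|x-y|\leq 1$, i.e., $T$ is the balanced double star $S_{\lfloor\frac{n-2}{2}\rfloor,\lceil\frac{n-2}{2}\rceil}$. Moreover, $$e^{M_2}(S_{\lfloor\frac{n-2}{2}\rfloor,\lceil\frac{n-2}{2}\rceil})=\begin{cases} e^{\frac{n^2}{4}}+(n-2)e^{\frac{n}{2}}, & n \text{ even},\\ e^{\frac{n^2-1}{4}}+\frac{n-3}{2}e^{\frac{n-1}{2}}+\frac{n-1}{2}e^{\frac{n+1}{2}}, & n\text{ odd}.\end{cases}$$
   Context: For a tree $G$ with edge set $E(G)$ and vertex degrees $d_G(v)$, the exponential of the second Zagreb index is $e^{M_2}(G)=\sum_{uv\in E(G)} e^{d_G(u)d_G(v)}$. For integers $x,y\geq 1$, the double star $S_{x,y}$ is the tree on $x+y+2$ vertices with exactly two non-pendent vertices, of degrees $x+1$ and $y+1$ (these two vertices are adjacent, the first has $x$ pendant neighbours and the second has $y$ pendant neighbours). *)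

(* Defs.v *)
From HB Require Import structures.
From mathcomp Require Import all_boot all_order all_algebra.
From mathcomp Require Import all_classical all_reals all_analysis.
Set Implicit Arguments. Unset Strict Implicit. Unset Printing Implicit Defensive.
Import Order.TTheory GRing.Theory Num.Theory.
Local Open Scope ring_scope.

(* A finite simple graph on vertex set 'I_N given by a (symmetric, irreflexive)
   adjacency relation. *)
Definition deg (N : nat) (adj : rel 'I_N) (u : 'I_N) : nat :=
  #|[set v | adj u v]|.

Definition eM2 (R : realType) (N : nat) (adj : rel 'I_N) : R :=
  \sum_(u : 'I_N) \sum_(v : 'I_N | (u < v)%N && adj u v)
     expR ((deg adj u * deg adj v)%N%:R).

(* Double star S_{x,y} on x+y+2 vertices: vertex 0 and vertex 1 are the two
   adjacent centres; vertices 2..x+1 are the x pendant neighbours of 0, and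
   vertices x+2..x+y+1 are the y pendant neighbours of 1. *)
Definition dstar_edge (x : nat) (u v : nat) : bool :=
  [|| (u == 0%N) && (v == 1%N),
      (u == 0%N) && (2 <= v <= x.+1)%N
    | (u == 1%N) && (x.+2 <= v)%N ].

Definition dstar_adj (x y : nat) : rel 'I_(x + y + 2) :=
  fun u v => dstar_edge x u v || dstar_edge x v u.

Arguments dstar_adj x y : clear implicits.
Arguments eM2 R {N} adj.

(* Main.v *)
Require Import Defs.
From HB Require Import structures.
From mathcomp Require Import all_boot all_order all_algebra.
From mathcomp Require Import all_classical all_reals all_analysis.
From mathcomp Require Import zify ring lra.
Import Order.TTheory GRing.Theory Num.Theory.
Local Open Scope ring_scope.
Definition dg (x y u : nat) : nat := if u == 0%N then x.+1 else if u == 1%N then y.+1 else 1%N.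

Lemma card_sum N (P : pred nat) : #|[set v : 'I_N | P v]| = (\sum_(0 <= v < N) (P v : nat))%N.
Proof.
rewrite -sum1_card big_mkcond /= big_mkord; apply: eq_bigr => i _; rewrite inE; by case: (P i).
Qed.

Lemma degE x y (u : 'I_(x + y + 2)) : deg (dstar_adj x y) u = dg x y u.
Proof.
rewrite /deg /dstar_adj (card_sum _ (fun v : nat => dstar_edge x u v || dstar_edge x v u)) /dg.
have N2 : (2 <= x + y + 2)%N by lia.
have Nx : (x.+2 <= x + y + 2)%N by lia.
have u_lt := ltn_ord u.
rewrite (big_cat_nat _ (n:=2)) //= (big_cat_nat _ (m:= 2) (n:=x.+2)) //=.
rewrite (big_ltn (m:=0)) // (big_ltn (m:=1)) // (big_geq (m:=2) (n:=2)) //.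
case: eqP => [u0|un0].
  rewrite u0 (@eq_big_nat _ _ _ 2 x.+2 _ (fun=> 1%N)); last by move=> i hi; rewrite /dstar_edge; lia.
  rewrite (@eq_big_nat _ _ _ x.+2 (x+y+2) _ (fun=> 0%N)); last by move=> i hi; rewrite /dstar_edge; lia.
  rewrite !sum_nat_const_nat /dstar_edge /=; lia.
case: eqP => [u1|un1].
  rewrite u1 (@eq_big_nat _ _ _ 2 x.+2 _ (fun=> 0%N)); last by move=> i hi; rewrite /dstar_edge; lia.
  rewrite (@eq_big_nat _ _ _ x.+2 (x+y+2) _ (fun=> 1%N)); last by move=> i hi; rewrite /dstar_edge; lia.
  rewrite !sum_nat_const_nat /dstar_edge /=; lia.
rewrite (@eq_big_nat _ _ _ 2 x.+2 _ (fun=> 0%N)); last by move=> i hi; rewrite /dstar_edge; lia.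
rewrite (@eq_big_nat _ _ _ x.+2 (x+y+2) _ (fun=> 0%N)); last by move=> i hi; rewrite /dstar_edge; lia.
rewrite !sum_nat_const_nat /dstar_edge /=.
have : (2 <= x.+2)%N by []. 
case/orP: (leqVgt u x.+1) => hu _; lia.
Qed.

Lemma dg_ge2 x y i : (2 <= i)%N -> dg x y i = 1%N.
Proof. by rewrite /dg; case: i => [|[|i]]. Qed.

Lemma sum_ord_nat (R : realType) N (P : nat -> nat -> bool) (F : nat -> nat -> R) :
  \sum_(u < N) \sum_(v < N | P u v) F u v = \sum_(0 <= u < N) \sum_(0 <= v < N | P u v) F u v.
Proof. rewrite big_mkord; apply: eq_bigr => u _; by rewrite big_mkord. Qed.

Lemma eM2E (R : realType) x y : eM2 R (dstar_adj x y) =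
  expR ((x.+1 * y.+1)%N%:R) + x%:R * expR (x.+1)%:R + y%:R * expR (y.+1)%:R.
Proof.
rewrite /eM2.
under eq_bigr => u _ do under eq_bigr => v _ do rewrite !degE.
rewrite /dstar_adj (@sum_ord_nat R _ (fun u v : nat => (u < v)%N && (dstar_edge x u v || dstar_edge x v u)) (
   fun u v : nat => expR (R:=R) (dg x y u * dg x y v)%:R)).
have N2 : (2 <= x + y + 2)%N by lia.
have Nx : (x.+2 <= x + y + 2)%N by lia.
rewrite (big_ltn (m:=0)); last lia.
rewrite (big_ltn (m:=1)); last lia.
have -> : \sum_(2 <= i < x + y + 2)
     \sum_(0 <= v < x + y + 2 | (i < v)%N && (dstar_edge x i v || dstar_edge x v i))
        expR (R:=R) (dg x y i * dg x y v)%:R = 0.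
  rewrite big_nat_cond big1 // => i /andP[/andP[hi _] _].
  rewrite big1 // => v /andP[hv he]; exfalso; move: he; rewrite /dstar_edge; lia.
have -> : \sum_(0 <= v < x + y + 2 | (0 < v)%N && (dstar_edge x 0 v || dstar_edge x v 0))
     expR (R:=R) (dg x y 0 * dg x y v)%:R = expR (x.+1 * y.+1)%:R + x%:R * expR x.+1%:R.
  rewrite big_mkcond (big_ltn (m:=0)); last lia.
  rewrite (big_ltn (m:=1)); last lia.
  rewrite (big_cat_nat (n:=x.+2)); [|lia|lia].
  rewrite (@eq_big_nat _ _ _ 2 x.+2 _ (fun=> expR (R:=R) x.+1%:R)); last first.
    move=> i hi; rewrite ifT; last (rewrite /dstar_edge; lia).
    rewrite (dg_ge2 x y i) ?muln1 //; lia.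
  rewrite (@eq_big_nat _ _ _ x.+2 (x+y+2) _ (fun=> 0)); last first.
    by move=> i hi; rewrite ifF //; rewrite /dstar_edge; lia.
  rewrite !sumr_const_nat /= mul0rn addr0 add0r; congr (_ + _).
  have -> : (x.+2 - 2 = x)%N by lia.
  by rewrite mulr_natl.
have -> : \sum_(0 <= v < x + y + 2 | (1 < v)%N && (dstar_edge x 1 v || dstar_edge x v 1))
     expR (R:=R) (dg x y 1 * dg x y v)%:R = y%:R * expR y.+1%:R.
  rewrite big_mkcond (big_ltn (m:=0)); last lia.
  rewrite (big_ltn (m:=1)); last lia.
  rewrite (big_cat_nat (n:=x.+2)); [|lia|lia].
  rewrite (@eq_big_nat _ _ _ 2 x.+2 _ (fun=> 0)); last first.
    by move=> i hi; rewrite ifF //; rewrite /dstar_edge; lia.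
  rewrite (@eq_big_nat _ _ _ x.+2 (x+y+2) _ (fun=> expR (R:=R) y.+1%:R)); last first.
    move=> i hi; rewrite ifT; last (rewrite /dstar_edge; lia).
    rewrite (dg_ge2 x y i) ?muln1 //; lia.
  rewrite !sumr_const_nat /= mul0rn !add0r.
  have -> : (x + y + 2 - x.+2 = y)%N by lia.
  by rewrite mulr_natl.
by rewrite addr0.
Qed.

Definition f (R : realType) (a b : nat) : R :=
  expR ((a.+1 * b.+1)%N%:R) + a%:R * expR (a.+1)%:R + b%:R * expR (b.+1)%:R.

Lemma f_lt (R : realType) c b : (1 <= b)%N -> (b.+1 <= c)%N -> f R c.+1 b < f R c b.+1.
Proof.
move=> hb hc; rewrite /f.
set P := (c.+2 * b.+1)%N%:R : R.
set Q := (c.+1 * b.+2)%N%:R : R.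
set e2 := expR (c.+2%:R : R).
have h1 : expR P * expR 1 <= expR Q.
  rewrite -expRD ler_expR /P /Q natr1 ler_nat; lia.
have h2 : 2 <= expR (1 : R) by have := expR_ge1Dx (1 : R).
have h3 : e2 * e2 <= expR P.
  rewrite -expRD ler_expR /P -natrD ler_nat; nia.
have h4 : 1 + c.+2%:R <= e2 by apply: expR_ge1Dx.
have h5 : b%:R * expR b.+1%:R <= b.+1%:R * expR (b.+2%:R : R).
  apply: ler_pM; rewrite ?ler_nat ?ler_expR ?ler_nat ?expR_ge0 //.
have h6 : 0 <= c%:R * expR (c.+1%:R : R) by rewrite mulr_ge0 ?expR_ge0.
have e2p : 0 < e2 by apply: expR_gt0.
have Pp : 0 < expR P by apply: expR_gt0.
have hc2 : (c.+2%:R : R) = c%:R + 2 by rewrite -natr1 -natr1; ring.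
have hc1 : (c.+1%:R : R) = c%:R + 1 by rewrite -natr1.
rewrite hc1 in h6 *.
rewrite hc2 in h4.
have h7 : (c%:R + 1) * e2 < e2 * e2 by nra.
have h8 : 2 * expR P <= expR Q by nra.
lra.
Qed.

Lemma f_sym (R : realType) a b : f R a b = f R b a.
Proof. by rewrite /f mulnC -!addrA [X in _ + X]addrC. Qed.

Theorem lemma3 (R : realType) (n x y : nat) (hn : (4 <= n)%N)
  (hx : (1 <= x)%N) (hy : (1 <= y)%N) (hxy : (x + y)%N = (n - 2)%N)
  (hmax : forall x' y' : nat, (1 <= x')%N -> (1 <= y')%N ->
            (x' + y')%N = (n - 2)%N ->
            eM2 R (dstar_adj x' y') <= eM2 R (dstar_adj x y)) :
  ((x <= y.+1)%N /\ (y <= x.+1)%N) /\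
  eM2 R (dstar_adj ((n - 2)./2) (uphalf (n - 2))) =
    (if odd n then
       expR ((n%:R ^+ 2 - 1) / 4) + ((n%:R - 3) / 2) * expR ((n%:R - 1) / 2)
         + ((n%:R - 1) / 2) * expR ((n%:R + 1) / 2)
     else expR (n%:R ^+ 2 / 4) + (n%:R - 2) * expR (n%:R / 2)).
Proof.
have fE a b : eM2 R (dstar_adj a b) = f R a b by rewrite eM2E.
split.
  split; rewrite leqNgt; apply/negP => h.
    case: x hx hxy hmax h => [//|c] hx hxy hmax h.
    have := hmax c y.+1 ltac:(lia) ltac:(lia) ltac:(lia).
    rewrite !fE => H; have := f_lt R c y hy ltac:(lia); lra.
  case: y hy hxy hmax h => [//|c] hy hxy hmax h.
  have := hmax x.+1 c ltac:(lia) ltac:(lia) ltac:(lia).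
  rewrite !fE => H; have := f_lt R c x hx ltac:(lia).
  rewrite (f_sym _ c.+1) (f_sym _ c); lra.
rewrite fE.
set m := (n - 2)%N.
have hm := odd_double_half m.
rewrite uphalf_half.
have hon : odd n = odd m by rewrite /m -[in LHS](subnK (_ : 2 <= n)%N) ?oddD //; lia.
rewrite hon.
move: hm; set k := m./2; case: (odd m) => /= hm.
  have -> : n = (k.*2 + 3)%N by lia.
  rewrite /f -mul2n add1n.
  by congr (expR _ + _ * expR _ + _ * expR _); field.
have -> : n = (k.*2 + 2)%N by lia.
rewrite /f -mul2n add0n -addrA.
have -> : (((2 * k + 2)%:R / 2) : R) = k.+1%:R by field => //.
by rewrite -mulrDl; congr (expR _ + _ * _); [field | ring].
Qed.
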